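(* Let $R$ be a (not necessarily unital) ring, or a (not necessarily unital) $K$-algebra. Then $R$ is locally unit-regular as a ring (respectively, as an algebra) if and only if $R$ is von Neumann regular and $eRe$ is unit-regular for every idempotent $e \in R$.
   Context: A ring $R$ is (von Neumann) regular if for each $x\in R$ there is $y\in R$ with $xyx=x$. A unital ring $S$ is unit-regular if for each $x\in S$ there is a unit $u$ of $S$ with $xux = x$. A ring (resp. $K$-algebra) $R$ is locally unit-regular if every finite subset of $R$ is contained in a subring (resp. $K$-subalgebra) of $R$ that has its own identity element (not necessarily equal to any identity of $R$) and is unit-regular. *)

(* Defs.v *)
(* Non-unital rings are not in MathComp, so a (possibly
   non-unital) ring is an additive group V (zmodType) with a multiplication
   satisfying associativity and distributivity; a (possibly non-unital)
   K-algebra is additionally a K-module (lmodType K) whose multiplication is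
   K-bilinear. *)
From HB Require Import structures.
From mathcomp Require Import all_boot all_order all_algebra.
Set Implicit Arguments. Unset Strict Implicit. Unset Printing Implicit Defensive.
Import GRing.Theory.
Local Open Scope ring_scope.

Definition nu_ring_axioms (V : zmodType) (mul : V -> V -> V) : Prop :=
  [/\ forall x y z, mul x (mul y z) = mul (mul x y) z,
      forall x y z, mul (x + y) z = mul x z + mul y z &
      forall x y z, mul x (y + z) = mul x y + mul x z].

Definition nu_alg_axioms (K : comPzRingType) (V : lmodType K)
    (mul : V -> V -> V) : Prop :=
  nu_ring_axioms mul /\
  (forall (k : K) x y, mul (k *: x) y = k *: mul x y /\ mul x (k *: y) = k *: mul x y).

Definition vn_regular (V : zmodType) (mul : V -> V -> V) : Prop :=
  forall x, exists y, mul (mul x y) x = x.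

Definition is_idempotent (V : zmodType) (mul : V -> V -> V) (e : V) : Prop :=
  mul e e = e.

Definition subring_pred (V : zmodType) (mul : V -> V -> V) (S : V -> Prop) : Prop :=
  [/\ S 0, forall x y, S x -> S y -> S (x - y) &
      forall x y, S x -> S y -> S (mul x y)].

Definition subalg_pred (K : comPzRingType) (V : lmodType K)
    (mul : V -> V -> V) (S : V -> Prop) : Prop :=
  subring_pred mul S /\ forall (k : K) x, S x -> S (k *: x).

Definition is_identity_of (V : zmodType) (mul : V -> V -> V) (S : V -> Prop)
    (one : V) : Prop :=
  S one /\ forall x, S x -> mul one x = x /\ mul x one = x.

Definition is_unit_in (V : zmodType) (mul : V -> V -> V) (S : V -> Prop)
    (one u : V) : Prop :=
  S u /\ exists v, [/\ S v, mul u v = one & mul v u = one].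

Definition unit_regular_on (V : zmodType) (mul : V -> V -> V)
    (S : V -> Prop) : Prop :=
  exists one, is_identity_of mul S one /\
    forall x, S x -> exists u, is_unit_in mul S one u /\ mul (mul x u) x = x.

Definition corner (V : zmodType) (mul : V -> V -> V) (e : V) : V -> Prop :=
  fun y => exists x, y = mul (mul e x) e.

Definition locally_unit_regular (V : zmodType) (mul : V -> V -> V) : Prop :=
  forall F : seq V, exists S : V -> Prop,
    [/\ subring_pred mul S, forall x, x \in F -> S x & unit_regular_on mul S].

Definition locally_unit_regular_alg (K : comPzRingType) (V : lmodType K)
    (mul : V -> V -> V) : Prop :=
  forall F : seq V, exists S : V -> Prop,
    [/\ subalg_pred mul S, forall x, x \in F -> S x & unit_regular_on mul S].

(* Main.v *)
Require Import Defs.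
From mathcomp Require Import all_boot all_order all_algebra.
Set Implicit Arguments. Unset Strict Implicit. Unset Printing Implicit Defensive.
Import GRing.Theory.
Local Open Scope ring_scope.

Section Basic.
Variables (V : zmodType) (mul : V -> V -> V).
Hypothesis H : nu_ring_axioms mul.
Local Notation "a ** b" := (mul a b) (at level 40, left associativity).
Lemma mA x y z : x ** (y ** z) = x ** y ** z. Proof. by case: H. Qed.
Lemma mDl x y z : (x + y) ** z = x ** z + y ** z. Proof. by case: H. Qed.
Lemma mDr x y z : x ** (y + z) = x ** y + x ** z. Proof. by case: H. Qed.
Lemma m0l x : 0 ** x = 0.
Proof. by apply: (addrI (0 ** x)); rewrite addr0 -mDl addr0. Qed.
Lemma m0r x : x ** 0 = 0.
Proof. by apply: (addrI (x ** 0)); rewrite addr0 -mDr addr0. Qed.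
Lemma mNl x y : (- x) ** y = - (x ** y).
Proof. by apply: (addrI (x ** y)); rewrite -mDl !subrr m0l. Qed.
Lemma mNr x y : x ** (- y) = - (x ** y).
Proof. by apply: (addrI (x ** y)); rewrite -mDr !subrr m0r. Qed.
Lemma mBl x y z : (x - y) ** z = x ** z - y ** z. Proof. by rewrite mDl mNl. Qed.
Lemma mBr x y z : x ** (y - z) = x ** y - x ** z. Proof. by rewrite mDr mNr. Qed.
End Basic.
Section Loc.
Variables (V : zmodType) (mul : V -> V -> V).
Hypothesis H : nu_ring_axioms mul.
Local Notation "a ** b" := (mul a b) (at level 40, left associativity).
Let mA := mA H. Let mDl := mDl H. Let mDr := mDr H. Let mBl := mBl H. Let mBr := mBr H.
Let m0l := m0l H. Let mNl := mNl H. Let mNr := mNr H. Let m0r := m0r H.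

Lemma step_left e x : vn_regular mul -> e ** e = e ->
  exists h, [/\ h ** h = h, e ** h = e, h ** e = e & h ** x = x].
Proof.
move=> reg ee; set x' := x - e ** x.
have [y xyx] := reg x'.
set f := x' ** y.
have ff : f ** f = f by rewrite /f mA; congr (_ ** _); rewrite xyx.
have fx : f ** x' = x' by rewrite /f xyx.
have ex : e ** x' = 0 by rewrite /x' mBr mA ee subrr.
have ef : e ** f = 0 by rewrite /f mA ex m0l.
clearbody f.
have ee' t : t ** e ** e = t ** e by rewrite -mA ee.
have ff' t : t ** f ** f = t ** f by rewrite -mA ff.
have ef' t : t ** e ** f = 0 by rewrite -mA ef m0r.
exists (e + f - f ** e); split.
- rewrite !(mDl, mBl, mDr, mBr) !(mNl, mNr) ?mA !(ee', ff', ef', ee, ff, ef, m0l, m0r).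
  by rewrite !(subr0, addr0, oppr0) (addrC (f ** e) f) addrK.
- rewrite !(mDl, mBl, mDr, mBr, mNl, mNr) ?mA !(ee', ff', ef', ee, ff, ef, m0l, m0r).
  by rewrite !(subr0, addr0, oppr0).
- rewrite !(mDl, mBl, mDr, mBr, mNl, mNr) ?mA !(ee', ff', ef', ee, ff, ef, m0l, m0r).
  by rewrite addrK.
- rewrite !(mDl, mBl) mNl -mA -addrA -mBr fx /x'.
  by rewrite addrC subrK.
Qed.
End Loc.

Lemma opp_ring (V : zmodType) (mul : V -> V -> V) :
  nu_ring_axioms mul -> nu_ring_axioms (fun a b => mul b a).
Proof. by case=> A Dl Dr; split=> *; rewrite ?A ?Dl ?Dr. Qed.

Section Loc2.
Variables (V : zmodType) (mul : V -> V -> V).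
Hypothesis H : nu_ring_axioms mul.
Local Notation "a ** b" := (mul a b) (at level 40, left associativity).
Let mA := mA H. 

Lemma local_units (F : seq V) : vn_regular mul ->
  exists g, g ** g = g /\ forall z, z \in F -> g ** z = z /\ z ** g = z.
Proof.
move=> reg; elim: F => [|x s [e [ee IH]]].
  by exists 0; split=> //; rewrite m0l.
have [h [hh eh he hx]] := step_left H x reg ee.
have reg' : vn_regular (fun a b => mul b a).
  move=> a; have [y ay] := reg a; exists y => /=; by rewrite mA.
have [g [gg hg gh xg]] := step_left (opp_ring H) x reg' hh.
move: gg hg gh xg => /= gg hg gh xg.
exists g; split=> // z; rewrite inE => /orP [/eqP -> | zs].
  by split=> //; rewrite -hx mA hg.
have [ez ze] := IH z zs.
have hz : h ** z = z by rewrite -ez mA he.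
have zh : z ** h = z by rewrite -ze -mA eh.
by split; [rewrite -hz mA hg | rewrite -zh -mA gh].
Qed.
End Loc2.

Section Corner.
Variables (V : zmodType) (mul : V -> V -> V).
Hypothesis H : nu_ring_axioms mul.
Local Notation "a ** b" := (mul a b) (at level 40, left associativity).
Let mA := mA H. Let mDl := mDl H. Let mDr := mDr H. Let mBl := mBl H. Let mBr := mBr H.
Let m0l := m0l H. Let m0r := m0r H. Let mNl := mNl H. Let mNr := mNr H.

Lemma tl2 x y r : x ** y = r -> forall t, t ** x ** y = t ** r.
Proof. by move=> h t; rewrite -h mA. Qed.
Lemma tl3 x y z r : x ** y ** z = r -> forall t, t ** x ** y ** z = t ** r.
Proof. by move=> h t; rewrite -h !mA. Qed.

Lemma corner_ur (S : V -> Prop) (o e c : V) : subring_pred mul S ->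
  is_identity_of mul S o ->
  (forall a, S a -> exists u, is_unit_in mul S o u /\ a ** u ** a = a) ->
  S e -> e ** e = e -> S c -> e ** c = c -> c ** e = c ->
  exists w, is_unit_in mul (corner mul e) e w /\ c ** w ** c = c.
Proof.
move=> [S0 SB SM] [So io] ur Se ee Sc ec ce.
have SD a b : S a -> S b -> S (a + b).
  by move=> Sa Sb; rewrite -[b]opprK -[- b]sub0r; apply: (SB) => //; apply: (SB).
have [oe eo] := io e Se. have [oc co] := io c Sc. have [oo _] := io o So.
set f := o - e.
have eof : e = o - f by rewrite /f opprB addrC subrK.
have Sf : S f by apply: (SB).
have [oF fo] := io f Sf.
have ef : e ** f = 0 by rewrite mBr eo ee subrr.
have fe : f ** e = 0 by rewrite mBl oe ee subrr.
have ff : f ** f = f by rewrite {1}/f mBr fo fe subr0.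
have cf : c ** f = 0 by rewrite mBr co ce subrr.
have fc : f ** c = 0 by rewrite mBl oc ec subrr.
set a := c + f.
have Sa : S a by apply: SD.
have ea : e ** a = c by rewrite mDr ec ef addr0.
have ae : a ** e = c by rewrite mDl ce fe addr0.
have fa : f ** a = f by rewrite mDr fc ff add0r.
have af : a ** f = f by rewrite mDl cf ff add0r.
have [u [[Su [v [Sv uv vu]]] aua]] := ur a Sa.
have [ou uo] := io u Su. have [ov vo] := io v Sv.
clearbody a f.
have cuf : c ** u ** f = 0.
  have := congr1 (fun t => e ** t ** f) aua => /=.
  by rewrite !mA ?ea ?fa ?(tl2 af) ?(tl2 ae) ?cf ?fe ?ff ?ce; move=> ->.
have fuc : f ** u ** c = 0.
  have := congr1 (fun t => f ** t ** e) aua => /=.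
  by rewrite !mA ?ea ?fa ?(tl2 af) ?(tl2 ae) ?cf ?fe ?ff ?ce; move=> ->.
have fuf : f ** u ** f = f.
  have := congr1 (fun t => f ** t ** f) aua => /=.
  by rewrite !mA ?ea ?fa ?(tl2 af) ?(tl2 ae) ?cf ?fe ?ff ?ce; move=> ->.
have cuc : c ** u ** c = c.
  have := congr1 (fun t => e ** t ** e) aua => /=.
  by rewrite !mA ?ea ?fa ?(tl2 af) ?(tl2 ae) ?cf ?fe ?ff ?ce; move=> ->.
have uev : u ** e ** v = o - u ** f ** v.
  by rewrite {1}eof mBr mBl uo uv.
have veu : v ** e ** u = o - v ** f ** u.
  by rewrite {1}eof mBr mBl vo vu.
exists (e ** (u - u ** f ** u) ** e); split; last first.
  rewrite !(mBl, mBr, mNl, mNr) ?mA.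
  rewrite !(ce, tl2 ce, tl2 ec, cuf, tl3 cuf, m0l, cuc).
  by rewrite subr0.
split; first by exists (u - u ** f ** u).
exists (e ** v ** e); split; first by exists v.
- rewrite !(mBl, mBr, mNl, mNr) ?mA.
  rewrite !(tl2 ee, tl3 uev, mBl, mBr, mNl, mNr, tl2 eo, tl2 fo, eo, tl3 fuf, tl2 fe, m0l, m0r, mA).
  by rewrite ee sub0r opprK subrK.
- rewrite !(mBl, mBr, mNl, mNr) ?mA.
  rewrite !(tl2 ee, tl3 veu, mBl, mBr, mNl, mNr, tl2 eo, tl2 fo, eo, tl3 fuf, tl2 ef, ef, m0l, m0r, mA).
  by rewrite ee sub0r opprK subrK.
Qed.
End Corner.

Section Main.
Variables (V : zmodType) (mul : V -> V -> V).
Hypothesis H : nu_ring_axioms mul.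
Local Notation "a ** b" := (mul a b) (at level 40, left associativity).
Let mA := mA H. Let mBr := mBr H. Let mBl := mBl H. Let m0l := m0l H. Let m0r := m0r H.

Lemma fwd : locally_unit_regular mul ->
  vn_regular mul /\ forall e, is_idempotent mul e -> unit_regular_on mul (corner mul e).
Proof.
move=> L; split.
  move=> x; have [S [_ Fx [o [_ ur]]]] := L [:: x].
  have [u [_ h]] := ur x (Fx x (mem_head _ _)).
  by exists u.
move=> e ee; exists e; split.
  split; first by exists e; rewrite !ee.
  by move=> y [t ->]; split; rewrite -?mA ?ee // !mA ee.
move=> y [t ->]; set c := e ** t ** e.
have ec : e ** c = c by rewrite /c !mA ee.
have ce : c ** e = c by rewrite /c -mA ee.
have [S [sr Fx [o [io ur]]]] := L [:: e; c].
have Se : S e by apply: Fx; rewrite inE eqxx.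
have Sc : S c by apply: Fx; rewrite !inE eqxx orbT.
exact: (corner_ur H sr io ur Se ee Sc ec ce).
Qed.

Lemma corner_sub g : g ** g = g -> subring_pred mul (corner mul g).
Proof.
move=> gg; split.
- by exists 0; rewrite m0r m0l.
- by move=> _ _ [a ->] [b ->]; exists (a - b); rewrite !mBr !mBl.
- move=> _ _ [a ->] [b ->]; exists (a ** g ** g ** b).
  by rewrite !mA -(mA (g ** a) g g) gg.
Qed.

Lemma bwd_g : vn_regular mul -> forall F : seq V,
  exists g, [/\ g ** g = g, subring_pred mul (corner mul g) &
                forall x, x \in F -> corner mul g x].
Proof.
move=> reg F; have [g [gg hF]] := local_units H F reg.
exists g; split => //; first exact: corner_sub.
move=> x /hF [gx xg]; exists x; by rewrite gx xg.
Qed.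

Lemma bwd : (vn_regular mul /\
   forall e, is_idempotent mul e -> unit_regular_on mul (corner mul e)) ->
  locally_unit_regular mul.
Proof.
move=> [reg cu] F; have [g [gg sr hF]] := bwd_g reg F.
by exists (corner mul g); split => //; apply: cu.
Qed.
End Main.

Theorem lemma5p1 :
  (forall (V : zmodType) (mul : V -> V -> V), nu_ring_axioms mul ->
     (locally_unit_regular mul <->
      (vn_regular mul /\
       forall e : V, is_idempotent mul e -> unit_regular_on mul (corner mul e))))
  /\
  (forall (K : comPzRingType) (V : lmodType K) (mul : V -> V -> V),
     nu_alg_axioms mul ->
     (locally_unit_regular_alg mul <->
      (vn_regular mul /\
       forall e : V, is_idempotent mul e -> unit_regular_on mul (corner mul e)))).
Proof.
split.
  by move=> V mul H; split; [apply: fwd | apply: bwd].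
move=> K V mul [H bil]; split.
  move=> L; apply: fwd => // F.
  by have [S [[sr _] hF ur]] := L F; exists S.
move=> [reg cu] F; have [g [gg sr hF]] := bwd_g H reg F.
exists (corner mul g); split => //; last exact: cu.
split => // k _ [a ->]; exists (k *: a).
by have [b1 _] := bil k (mul g a) g; have [_ b2] := bil k g a; rewrite b2 b1.
Qed.
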